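(* (1) For all $(x,v)\in\mathbb R^3_0\times\mathbb R^3$, $\nabla_xV(x,v)\cdot v + \nabla_vV(x,v)\cdot(-\mu x/|x|^3)=0$, where $\nabla_x V= k_1 v\times\Delta L + k_2\big(v\times(\Delta A\times v)-\tfrac{\mu}{|x|}\Delta A+\tfrac{\mu}{|x|^3}xx^T\Delta A\big)$ and $\nabla_v V = k_1\Delta L\times x + k_2\big((x\times v)\times\Delta A + x\times(v\times\Delta A)\big)$, with $\Delta L=L(x,v)-L_0$, $\Delta A=A(x,v)-A_0$. (2) For any $c$ with $0<c<\min\{k_1|L_0|^2/2,\ k_2(\mu-|A_0|)^2/2\}$, the set $V^{-1}([0,c])$ is a compact subset of $\mathbb R^3_0\times\mathbb R^3$.
   Context: $\mathbb R^3_0=\mathbb R^3\setminus\{0\}$, $\mu>0$. $L(x,v)=x\times v$ (angular momentum) and $A(x,v)=v\times(x\times v)-\mu x/|x|$ (Laplace–Runge–Lenz vector). Fix $L_0,A_0\in\mathbb R^3$ with $L_0\perp A_0$, $L_0\ne0$, $|A_0|<\mu$. With $k_1,k_2>0$, $V(x,v)=\tfrac{k_1}{2}|L(x,v)-L_0|^2+\tfrac{k_2}{2}|A(x,v)-A_0|^2$ on $\mathbb R^3_0\times\mathbb R^3$. *)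

(* Defs.v *)
From Stdlib Require Import Reals Lra List.
Open Scope R_scope.

Record vec3 := mk3 { c1 : R; c2 : R; c3 : R }.

Definition vadd (a b : vec3) : vec3 := mk3 (c1 a + c1 b) (c2 a + c2 b) (c3 a + c3 b).
Definition vscale (s : R) (a : vec3) : vec3 := mk3 (s * c1 a) (s * c2 a) (s * c3 a).
Definition vopp (a : vec3) : vec3 := vscale (-1) a.
Definition vsub (a b : vec3) : vec3 := vadd a (vopp b).
Definition vzero : vec3 := mk3 0 0 0.
Definition dot (a b : vec3) : R := c1 a * c1 b + c2 a * c2 b + c3 a * c3 b.
Definition cross (a b : vec3) : vec3 :=
  mk3 (c2 a * c3 b - c3 a * c2 b)
      (c3 a * c1 b - c1 a * c3 b)
      (c1 a * c2 b - c2 a * c1 b).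
Definition vnorm (a : vec3) : R := sqrt (dot a a).

Definition Lvec (x v : vec3) : vec3 := cross x v.
Definition Avec (mu : R) (x v : vec3) : vec3 :=
  vsub (cross v (cross x v)) (vscale (mu / vnorm x) x).

Definition Vfun (mu k1 k2 : R) (L0 A0 : vec3) (x v : vec3) : R :=
  k1 / 2 * (vnorm (vsub (Lvec x v) L0)) ^ 2
  + k2 / 2 * (vnorm (vsub (Avec mu x v) A0)) ^ 2.

(* The claimed gradients (x x^T dA written as x (x . dA)) *)
Definition gradx_V (mu k1 k2 : R) (L0 A0 : vec3) (x v : vec3) : vec3 :=
  let dL := vsub (Lvec x v) L0 in
  let dA := vsub (Avec mu x v) A0 in
  vadd (vscale k1 (cross v dL))
       (vscale k2 (vadd (vadd (cross v (cross dA v)) (vscale (- (mu / vnorm x)) dA))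
                        (vscale (mu / (vnorm x ^ 3) * dot x dA) x))).

Definition gradv_V (mu k1 k2 : R) (L0 A0 : vec3) (x v : vec3) : vec3 :=
  let dL := vsub (Lvec x v) L0 in
  let dA := vsub (Avec mu x v) A0 in
  vadd (vscale k1 (cross dL x))
       (vscale k2 (vadd (cross (cross x v) dA) (cross x (cross v dA)))).

Definition pdist (p q : vec3 * vec3) : R :=
  sqrt (dot (vsub (fst p) (fst q)) (vsub (fst p) (fst q))
        + dot (vsub (snd p) (snd q)) (vsub (snd p) (snd q))).

Definition open6 (U : vec3 * vec3 -> Prop) : Prop :=
  forall p, U p -> exists eps, 0 < eps /\ forall q, pdist p q < eps -> U q.

Definition compact6 (S : vec3 * vec3 -> Prop) : Prop :=
  forall (I : Type) (U : I -> vec3 * vec3 -> Prop),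
    (forall i, open6 (U i)) ->
    (forall p, S p -> exists i, U i p) ->
    exists l : list I, forall p, S p -> exists i, In i l /\ U i p.

(* Main.v *)
Require Import Defs.
From Stdlib Require Import Reals Lra List Classical ClassicalEpsilon.
From Coquelicot Require Import Coquelicot.
Open Scope R_scope.

Lemma dot_ge0 a : 0 <= dot a a.
Proof. unfold dot; nra. Qed.
Lemma vnorm_sq a : vnorm a ^ 2 = dot a a.
Proof. unfold vnorm; apply pow2_sqrt, dot_ge0. Qed.
Lemma Vfun_eq mu k1 k2 L0 A0 x v : Vfun mu k1 k2 L0 A0 x v =
  k1 / 2 * dot (vsub (Lvec x v) L0) (vsub (Lvec x v) L0)
  + k2 / 2 * dot (vsub (Avec mu x v) A0) (vsub (Avec mu x v) A0).
Proof. unfold Vfun; rewrite !vnorm_sq; reflexivity. Qed.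

Lemma d_plus f g x df dg : is_derive f x df -> is_derive g x dg ->
  is_derive (fun t => f t + g t) x (df + dg).
Proof. intros; apply (is_derive_plus f g); auto. Qed.
Lemma d_minus f g x df dg : is_derive f x df -> is_derive g x dg ->
  is_derive (fun t => f t - g t) x (df - dg).
Proof. intros; apply (is_derive_minus f g); auto. Qed.
Lemma d_mult f g x df dg : is_derive f x df -> is_derive g x dg ->
  is_derive (fun t => f t * g t) x (df * g x + f x * dg).
Proof. intros; apply (is_derive_mult f g); auto. intros; apply Rmult_comm. Qed.
Lemma d_const (a x : R) : is_derive (fun _ : R => a) x 0.
Proof. apply (@is_derive_const R_AbsRing R_NormedModule). Qed.
Lemma d_id (x : R) : is_derive (fun t : R => t) x 1.
Proof. apply (@is_derive_id R_AbsRing). Qed.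
Lemma d_eq (f : R -> R) (x l l' : R) : is_derive f x l -> l = l' -> is_derive f x l'.
Proof. intros H ->; exact H. Qed.

Definition vder (F : R -> vec3) (t : R) (D : vec3) :=
  is_derive (fun s => Defs.c1 (F s)) t (Defs.c1 D) /\ is_derive (fun s => Defs.c2 (F s)) t (Defs.c2 D)
  /\ is_derive (fun s => Defs.c3 (F s)) t (Defs.c3 D).

Lemma vder_const a t : vder (fun _ => a) t vzero.
Proof. split; [|split]; simpl; apply d_const. Qed.

Ltac dstep := match goal with
| |- is_derive (fun _ => ?a) _ _ => apply d_const
| |- is_derive (fun t => t) _ _ => apply d_id
| |- is_derive (fun t => @?f t + @?g t) _ _ => apply d_plus
| |- is_derive (fun t => @?f t - @?g t) _ _ => apply d_minus
| |- is_derive (fun t => @?f t * @?g t) _ _ => apply d_mult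
| |- is_derive _ _ _ => eassumption
end.
Ltac dsolve := repeat dstep.
Ltac vdt := let H1 := fresh in let H2 := fresh in let H3 := fresh in
  let G1 := fresh in let G2 := fresh in let G3 := fresh in
  intros; unfold vder in *;
  repeat match goal with H : _ /\ _ |- _ => destruct H end;
  split; [|split]; simpl; (eapply d_eq; [dsolve | simpl; ring]).

Lemma vder_line x w t : vder (fun s => vadd x (vscale s w)) t w.
Proof. vdt. Qed.

Lemma vder_add F G t DF DG : vder F t DF -> vder G t DG ->
  vder (fun s => vadd (F s) (G s)) t (vadd DF DG).
Proof. vdt. Qed.

Lemma vder_sub F G t DF DG : vder F t DF -> vder G t DG ->
  vder (fun s => vsub (F s) (G s)) t (vsub DF DG).
Proof. vdt. Qed.

Lemma vder_scale f F t df DF : is_derive f t df -> vder F t DF ->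
  vder (fun s => vscale (f s) (F s)) t (vadd (vscale df (F t)) (vscale (f t) DF)).
Proof. vdt. Qed.

Lemma vder_cross F G t DF DG : vder F t DF -> vder G t DG ->
  vder (fun s => cross (F s) (G s)) t (vadd (cross DF (G t)) (cross (F t) DG)).
Proof. vdt. Qed.

Lemma der_dot F G t DF DG : vder F t DF -> vder G t DG ->
  is_derive (fun s => dot (F s) (G s)) t (dot DF (G t) + dot (F t) DG).
Proof. intros; unfold vder, dot in *;
  repeat match goal with H : _ /\ _ |- _ => destruct H end;
  eapply d_eq; [dsolve|cbv beta; ring]. Qed.

Lemma nz_dot x : x <> vzero -> 0 < dot x x.
Proof.
  destruct x as [a b c]; unfold dot; simpl; intro Hx.
  destruct (Req_dec a 0); destruct (Req_dec b 0); destruct (Req_dec c 0);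
    try (subst; exfalso; apply Hx; reflexivity); nra.
Qed.
Lemma der_N mu x w : x <> vzero ->
  is_derive (fun s => mu / vnorm (vadd x (vscale s w))) 0 (- (mu * dot x w / vnorm x ^ 3)).
Proof.
  intros Hx. pose proof (nz_dot x Hx) as Hs.
  destruct x as [x1 x2 x3]; destruct w as [w1 w2 w3]; unfold vnorm, dot, vadd, vscale in *; simpl in *.
  assert (Hr : 0 < sqrt (x1 * x1 + x2 * x2 + x3 * x3)) by (apply sqrt_lt_R0; lra).
  auto_derive; rewrite ?Rmult_0_l, ?Rplus_0_r.
  - split; [lra|split; [lra|trivial]].
  - field. lra.
Qed.

Lemma vnorm_pos x : x <> vzero -> 0 < vnorm x.
Proof. intro H; unfold vnorm; apply sqrt_lt_R0, nz_dot, H. Qed.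

Lemma line0 x w : vadd x (vscale 0 w) = x.
Proof. destruct x, w; unfold vadd, vscale; simpl; f_equal; ring. Qed.

Ltac vstep := match goal with
| |- vder (fun _ => ?a) _ _ => apply vder_const
| |- vder (fun s => vadd ?x (vscale s ?w)) _ _ => apply vder_line
| |- vder (fun s => vadd _ _) _ _ => apply vder_add
| |- vder (fun s => vsub _ _) _ _ => apply vder_sub
| |- vder (fun s => cross _ _) _ _ => apply vder_cross
| |- vder (fun s => vscale _ _) _ _ => apply vder_scale
| |- is_derive (fun _ => ?a) _ _ => apply d_const
| |- is_derive (fun s => _ / vnorm (vadd _ (vscale s _))) _ _ => apply der_N; assumption
end.

Lemma part1x mu k1 k2 L0 A0 x v w : x <> vzero ->
  derivable_pt_lim (fun t => Vfun mu k1 k2 L0 A0 (vadd x (vscale t w)) v) 0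
                         (dot (gradx_V mu k1 k2 L0 A0 x v) w).
Proof.
  intros Hx. apply is_derive_Reals.
  eapply is_derive_ext. { intro t. symmetry. apply Vfun_eq. }
  unfold Lvec, Avec.
  eapply d_eq.
  { apply d_plus; (apply d_mult; [apply d_const | apply der_dot; repeat vstep]). }
  cbv beta. rewrite !line0.
  unfold gradx_V, Lvec, Avec. cbv zeta.
  replace (mu * dot x w / vnorm x ^ 3) with (mu / vnorm x ^ 3 * dot x w) by (unfold Rdiv; ring).
  generalize (vsub (cross x v) L0). intro dL.
  generalize (vsub (vsub (cross v (cross x v)) (vscale (mu / vnorm x) x)) A0). intro dA.
  generalize (mu / vnorm x ^ 3) (mu / vnorm x). intros q n.
  destruct x, v, w, dL, dA; unfold vsub, vadd, vopp, vscale, cross, dot, vzero; simpl.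
  field.
Qed.

Lemma part1v mu k1 k2 L0 A0 x v w : x <> vzero ->
  derivable_pt_lim (fun t => Vfun mu k1 k2 L0 A0 x (vadd v (vscale t w))) 0
                         (dot (gradv_V mu k1 k2 L0 A0 x v) w).
Proof.
  intros Hx. apply is_derive_Reals.
  eapply is_derive_ext. { intro t. symmetry. apply Vfun_eq. }
  unfold Lvec, Avec.
  eapply d_eq.
  { apply d_plus; (apply d_mult; [apply d_const | apply der_dot; repeat vstep]). }
  cbv beta. rewrite !line0.
  unfold gradv_V, Lvec, Avec. cbv zeta.
  generalize (vsub (cross x v) L0). intro dL.
  generalize (vsub (vsub (cross v (cross x v)) (vscale (mu / vnorm x) x)) A0). intro dA.
  generalize (mu / vnorm x). intros n.
  destruct x, v, w, dL, dA; unfold vsub, vadd, vopp, vscale, cross, dot, vzero; simpl.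
  field.
Qed.

Lemma part1c mu k1 k2 L0 A0 x v : x <> vzero ->
     dot (gradx_V mu k1 k2 L0 A0 x v) v
     + dot (gradv_V mu k1 k2 L0 A0 x v) (vscale (- (mu / (vnorm x ^ 3))) x) = 0.
Proof.
  intros Hx. pose proof (vnorm_sq x) as Hsq.
  pose proof (vnorm_pos x Hx) as Hr.
  assert (Hq : mu / vnorm x ^ 3 * dot x x = mu / vnorm x).
  { rewrite <- Hsq. field. lra. }
  unfold gradx_V, gradv_V. cbv zeta.
  generalize (vsub (Lvec x v) L0). intro dL.
  generalize (vsub (Avec mu x v) A0). intro dA.
  transitivity (k2 * dot dA v * (mu / vnorm x ^ 3 * dot x x - mu / vnorm x)).
  - generalize (mu / vnorm x ^ 3) (mu / vnorm x). intros q n.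
    clear Hq Hsq Hr Hx.
    destruct x, v, dL, dA; unfold vsub, vadd, vopp, vscale, cross, dot, vzero; simpl.
    ring.
  - rewrite Hq. ring.
Qed.


Lemma vnorm_ge0 a : 0 <= vnorm a.
Proof. unfold vnorm; apply sqrt_pos. Qed.

Lemma sqrt_le_sq a b : 0 <= b -> a <= b ^ 2 -> sqrt a <= b.
Proof.
  intros Hb H. rewrite <- (sqrt_pow2 b Hb). apply sqrt_le_1_alt. exact H.
Qed.

Lemma le_sq_le a b : 0 <= b -> a ^ 2 <= b ^ 2 -> a <= b.
Proof. intros Hb H. destruct (Rle_or_lt a b); [auto|nra]. Qed.

Lemma CS a b : dot a b <= vnorm a * vnorm b.
Proof.
  apply le_sq_le. apply Rmult_le_pos; apply vnorm_ge0.
  rewrite Rpow_mult_distr, !vnorm_sq.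
  destruct a as [a1 a2 a3], b as [b1 b2 b3]; unfold dot; simpl.
  assert (H : (a1*a1+a2*a2+a3*a3)*(b1*b1+b2*b2+b3*b3) - (a1*b1+a2*b2+a3*b3)^2
     = (a2*b3-a3*b2)^2 + (a3*b1-a1*b3)^2 + (a1*b2-a2*b1)^2) by ring.
  pose proof (pow2_ge_0 (a2*b3-a3*b2)); pose proof (pow2_ge_0 (a3*b1-a1*b3));
  pose proof (pow2_ge_0 (a1*b2-a2*b1)). lra.
Qed.

Lemma CSabs a b : Rabs (dot a b) <= vnorm a * vnorm b.
Proof.
  unfold Rabs; destruct Rcase_abs.
  - replace (- dot a b) with (dot (vopp a) b) by (destruct a, b; unfold dot, vopp, vscale; simpl; ring).
    replace (vnorm a) with (vnorm (vopp a)) by (unfold vnorm; f_equal; destruct a; unfold dot, vopp, vscale; simpl; ring).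
    apply CS.
  - apply CS.
Qed.

Lemma tri a b : vnorm (vadd a b) <= vnorm a + vnorm b.
Proof.
  apply le_sq_le. pose proof (vnorm_ge0 a); pose proof (vnorm_ge0 b); lra.
  rewrite vnorm_sq. pose proof (CS a b).
  replace (dot (vadd a b) (vadd a b)) with (dot a a + 2 * dot a b + dot b b)
    by (destruct a, b; unfold dot, vadd; simpl; ring).
  rewrite <- !vnorm_sq. nra.
Qed.

Lemma vnorm_opp a : vnorm (vopp a) = vnorm a.
Proof. unfold vnorm; f_equal; destruct a; unfold dot, vopp, vscale; simpl; ring. Qed.

Lemma tri_sub a b : vnorm (vsub a b) <= vnorm a + vnorm b.
Proof. unfold vsub. rewrite <- (vnorm_opp b). apply tri. Qed.

Lemma vnorm_sub_sym a b : vnorm (vsub a b) = vnorm (vsub b a).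
Proof. unfold vnorm; f_equal; destruct a, b; unfold dot, vsub, vadd, vopp, vscale; simpl; ring. Qed.

Lemma rev_tri a b : vnorm a <= vnorm b + vnorm (vsub a b).
Proof.
  replace a with (vadd b (vsub a b)) at 1 by
    (destruct a, b; unfold vsub, vadd, vopp, vscale; simpl; f_equal; ring).
  apply tri.
Qed.

Lemma coord_le a : Rabs (Defs.c1 a) <= vnorm a /\ Rabs (Defs.c2 a) <= vnorm a /\ Rabs (Defs.c3 a) <= vnorm a.
Proof.
  destruct a as [a1 a2 a3]; unfold vnorm, dot; simpl.
  split; [|split]; rewrite <- sqrt_Rsqr_abs; apply sqrt_le_1_alt; unfold Rsqr; nra.
Qed.

Lemma vnorm_scale s a : vnorm (vscale s a) = Rabs s * vnorm a.
Proof.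
  unfold vnorm. rewrite <- sqrt_Rsqr_abs, <- sqrt_mult.
  - f_equal; destruct a; unfold dot, vscale, Rsqr; simpl; ring.
  - apply Rle_0_sqr.
  - apply dot_ge0.
Qed.

Lemma dot_sym a b : dot a b = dot b a.
Proof. destruct a, b; unfold dot; simpl; ring. Qed.

Lemma le_div a b c : 0 < c -> a * c <= b -> a <= b / c.
Proof. intros Hc H. unfold Rdiv. apply Rmult_le_reg_r with c; [lra|].
  rewrite Rmult_assoc, Rinv_l; lra. Qed.
Lemma div_le a b c : 0 < c -> b <= a * c -> b / c <= a.
Proof. intros Hc H. unfold Rdiv. apply Rmult_le_reg_r with c; [lra|].
  rewrite Rmult_assoc, Rinv_l; lra. Qed.

Lemma sq_le_of a b : 0 <= a -> a <= b -> a ^ 2 <= b ^ 2.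
Proof. intros; nra. Qed.

Lemma norm_le_of_sq (a d s : R) : 0 <= d -> d ^ 2 = s -> 0 <= a -> a ^ 2 <= s -> a <= d.
Proof. intros Hd Hds Ha H. apply le_sq_le; lra. Qed.

Lemma Sbounds mu k1 k2 L0 A0 c :
  0 < mu -> 0 < k1 -> 0 < k2 -> vnorm A0 < mu -> 0 < c ->
  c < Rmin (k1 * vnorm L0 ^ 2 / 2) (k2 * (mu - vnorm A0) ^ 2 / 2) ->
  exists rho M, 0 < rho /\ 0 < M /\ forall x v, x <> vzero -> Vfun mu k1 k2 L0 A0 x v <= c ->
     rho <= vnorm x /\ vnorm x <= M /\ vnorm v <= M.
Proof.
  intros Hmu Hk1 Hk2 HA0 Hc Hcm.
  pose proof (Rmin_l (k1 * vnorm L0 ^ 2 / 2) (k2 * (mu - vnorm A0) ^ 2 / 2)) as Hm1.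
  pose proof (Rmin_r (k1 * vnorm L0 ^ 2 / 2) (k2 * (mu - vnorm A0) ^ 2 / 2)) as Hm2.
  set (l0 := vnorm L0) in *. set (a0 := vnorm A0) in *.
  assert (Hl0 : 0 <= l0) by apply vnorm_ge0. assert (Ha0 : 0 <= a0) by apply vnorm_ge0.
  set (dL := sqrt (2 * c / k1)). set (dA := sqrt (2 * c / k2)).
  assert (HdL2 : dL ^ 2 = 2 * c / k1) by (apply pow2_sqrt; apply Rlt_le; apply Rdiv_lt_0_compat; lra).
  assert (HdA2 : dA ^ 2 = 2 * c / k2) by (apply pow2_sqrt; apply Rlt_le; apply Rdiv_lt_0_compat; lra).
  assert (HdL0 : 0 <= dL) by apply sqrt_pos. assert (HdA0 : 0 <= dA) by apply sqrt_pos.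
  assert (HdL : dL < l0).
  { destruct (Rlt_or_le dL l0) as [h|h]; auto. exfalso.
    assert (l0 ^ 2 <= dL ^ 2) by (apply sq_le_of; lra).
    rewrite HdL2 in H. assert (k1 * l0 ^ 2 <= 2 * c).
    { apply Rmult_le_reg_r with (/ k1). apply Rinv_0_lt_compat; lra.
      replace (k1 * l0 ^ 2 * / k1) with (l0 ^ 2) by (field; lra). unfold Rdiv in H; lra. }
    lra. }
  assert (HdA : dA < mu - a0).
  { destruct (Rlt_or_le dA (mu - a0)) as [h|h]; auto. exfalso.
    assert ((mu - a0) ^ 2 <= dA ^ 2) by (apply sq_le_of; lra).
    rewrite HdA2 in H. assert (k2 * (mu - a0) ^ 2 <= 2 * c).
    { apply Rmult_le_reg_r with (/ k2). apply Rinv_0_lt_compat; lra.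
      replace (k2 * (mu - a0) ^ 2 * / k2) with ((mu - a0) ^ 2) by (field; lra). unfold Rdiv in H; lra. }
    lra. }
  set (ell := l0 - dL). set (alpha := a0 + dA).
  assert (Hell : 0 < ell) by (unfold ell; lra).
  assert (Hal : 0 <= alpha < mu) by (unfold alpha; lra).
  exists (ell ^ 2 / (alpha + mu)), ((l0 + dL) ^ 2 / (mu - alpha) + (alpha + mu) / ell).
  split; [apply Rdiv_lt_0_compat; [nra|lra]|].
  split. { assert (0 < (l0 + dL) ^ 2 / (mu - alpha)) by (apply Rdiv_lt_0_compat; [nra|lra]).
           assert (0 < (alpha + mu) / ell) by (apply Rdiv_lt_0_compat; lra). lra. }
  intros x v Hx HV.
  unfold Vfun in HV.
  set (L := Lvec x v) in *. set (A := Avec mu x v) in *.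
  assert (HnL : 0 <= vnorm (vsub L L0)) by apply vnorm_ge0.
  assert (HnA : 0 <= vnorm (vsub A A0)) by apply vnorm_ge0.
  assert (HdLx : vnorm (vsub L L0) <= dL).
  { apply norm_le_of_sq with (2 * c / k1); auto.
    apply Rmult_le_reg_l with (k1 / 2). apply Rdiv_lt_0_compat; lra.
    replace (k1 / 2 * (2 * c / k1)) with c by (field; lra). nra. }
  assert (HdAx : vnorm (vsub A A0) <= dA).
  { apply norm_le_of_sq with (2 * c / k2); auto.
    apply Rmult_le_reg_l with (k2 / 2). apply Rdiv_lt_0_compat; lra.
    replace (k2 / 2 * (2 * c / k2)) with c by (field; lra). nra. }
  assert (HLlo : ell <= vnorm L).
  { pose proof (rev_tri L0 L). rewrite vnorm_sub_sym in H. fold l0 in H. unfold ell; lra. }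
  assert (HLhi : vnorm L <= l0 + dL).
  { pose proof (rev_tri L L0). fold l0 in H. lra. }
  assert (HA : vnorm A <= alpha).
  { pose proof (rev_tri A A0). fold a0 in H. unfold alpha; lra. }
  pose proof (vnorm_pos x Hx) as Hr.
  assert (Hid : dot x A = vnorm L ^ 2 - mu * vnorm x).
  { rewrite vnorm_sq. unfold A, L, Avec, Lvec.
    assert (E1 : forall P s, dot x (vsub P (vscale s x)) = dot x P - s * dot x x)
      by (intros P s; destruct x, P; unfold dot, vsub, vadd, vopp, vscale; simpl; ring).
    rewrite E1. rewrite <- (vnorm_sq x).
    replace (dot x (cross v (cross x v))) with (dot (cross x v) (cross x v))
      by (destruct x, v; unfold dot, cross; simpl; ring).
    field. lra. }
  assert (HCS : - (vnorm x * vnorm A) <= dot x A <= vnorm x * vnorm A).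
  { pose proof (CSabs x A) as HCS. unfold Rabs in HCS. destruct (Rcase_abs (dot x A)); lra. }
  assert (Hrl : vnorm x * vnorm A <= vnorm x * alpha) by (apply Rmult_le_compat_l; lra).
  assert (HL2 : ell ^ 2 <= vnorm L ^ 2) by (apply sq_le_of; lra).
  assert (HL3 : vnorm L ^ 2 <= (l0 + dL) ^ 2) by (apply sq_le_of; [apply vnorm_ge0|lra]).
  split; [|split].
  - apply div_le; [lra|]. nra.
  - assert (vnorm x <= (l0 + dL) ^ 2 / (mu - alpha)) by (apply le_div; [lra|]; nra).
    assert (0 < (alpha + mu) / ell) by (apply Rdiv_lt_0_compat; lra). lra.
  - assert (Hv : vnorm v * vnorm L <= alpha + mu).
    { assert (E2 : vnorm (cross v L) = vnorm v * vnorm L).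
      { unfold vnorm. rewrite <- sqrt_mult by apply dot_ge0. f_equal.
        unfold L, Lvec. destruct x, v; unfold dot, cross; simpl; ring. }
      rewrite <- E2.
      replace (cross v L) with (vadd A (vscale (mu / vnorm x) x)).
      2:{ unfold A, L, Avec, Lvec. generalize (mu / vnorm x). intro s.
          destruct x, v; unfold vsub, vadd, vopp, vscale, cross; simpl; f_equal; ring. }
      eapply Rle_trans. apply tri. rewrite vnorm_scale.
      rewrite Rabs_right by (apply Rle_ge; apply Rlt_le; apply Rdiv_lt_0_compat; lra).
      replace (mu / vnorm x * vnorm x) with mu by (field; lra). lra. }
    assert (vnorm v <= (alpha + mu) / ell).
    { apply le_div; [lra|]. pose proof (vnorm_ge0 v). nra. }
    assert (0 < (l0 + dL) ^ 2 / (mu - alpha)) by (apply Rdiv_lt_0_compat; [nra|lra]). lra.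
Qed.


Definition P6 := (vec3 * vec3)%type.
Definition Fp (p : P6) (P : P6 -> Prop) : Prop :=
  exists d, 0 < d /\ forall q, pdist p q < d -> P q.

Global Instance Fp_filter p : Filter (Fp p).
Proof.
  constructor.
  - exists 1; split; [lra|auto].
  - intros P Q [d1 [H1 HP]] [d2 [H2 HQ]]. exists (Rmin d1 d2); split.
    + apply Rmin_glb_lt; auto.
    + intros q Hq. split; [apply HP|apply HQ];
      eapply Rlt_le_trans; eauto; [apply Rmin_l|apply Rmin_r].
  - intros P Q HPQ [d [H HP]]. exists d; split; auto.
Qed.

Definition cont (f : P6 -> R) (p : P6) := filterlim f (Fp p) (locally (f p)).

Lemma cont_const a p : cont (fun _ => a) p.
Proof. intros P HP. exists 1; split; [lra|]. intros; now apply locally_singleton. Qed.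

Lemma cont_lip g p : (forall q, Rabs (g q - g p) <= pdist p q) -> cont g p.
Proof.
  intros Hg P [eps HP]. exists eps; split; [apply cond_pos|].
  intros q Hq. apply HP. change (Rabs (g q - g p) < eps).
  eapply Rle_lt_trans; eauto.
Qed.

Lemma cont_plus f g p : cont f p -> cont g p -> cont (fun q => f q + g q) p.
Proof. intros Hf Hg. unfold cont. eapply (filterlim_comp_2 f g Rplus); [exact Hf|exact Hg|].
  exact (filterlim_plus (K := R_AbsRing) (f p) (g p)). Qed.

Lemma cont_mult f g p : cont f p -> cont g p -> cont (fun q => f q * g q) p.
Proof. intros Hf Hg. unfold cont. eapply (filterlim_comp_2 f g Rmult); [exact Hf|exact Hg|].
  exact (filterlim_mult (K := R_AbsRing) (f p) (g p)). Qed.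

Lemma cont_opp f p : cont f p -> cont (fun q => - f q) p.
Proof. intros Hf. unfold cont. apply (filterlim_comp _ _ _ f Ropp _ (locally (f p))); auto.
  exact (filterlim_opp (K := R_AbsRing) (f p)). Qed.

Lemma cont_minus f g p : cont f p -> cont g p -> cont (fun q => f q - g q) p.
Proof. intros. unfold Rminus. apply cont_plus; auto. apply cont_opp; auto. Qed.

Lemma cont_inv f p : cont f p -> f p <> 0 -> cont (fun q => / f q) p.
Proof. intros Hf Hn. unfold cont. apply (filterlim_comp _ _ _ f Rinv _ (locally (f p))); auto.
  assert (Hn' : Finite (f p) <> Finite 0) by (intro E; apply Hn; injection E; auto).
  exact (filterlim_Rbar_inv (Finite (f p)) Hn'). Qed.

Lemma cont_sqrt f p : cont f p -> cont (fun q => sqrt (f q)) p.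
Proof. intros Hf. unfold cont. apply (filterlim_comp _ _ _ f sqrt _ (locally (f p))); auto.
  apply continuous_sqrt. Qed.

Lemma cont_div f g p : cont f p -> cont g p -> g p <> 0 -> cont (fun q => f q / g q) p.
Proof. intros. unfold Rdiv. apply cont_mult; auto. apply cont_inv; auto. Qed.

Lemma abs_le_sqrt6 a b c d e f :
  Rabs a <= sqrt (a*a + b*b + c*c + (d*d + e*e + f*f)).
Proof. rewrite <- sqrt_Rsqr_abs. apply sqrt_le_1_alt. unfold Rsqr; nra. Qed.

Lemma coord_pdist p q :
  Rabs (Defs.c1 (fst q) - Defs.c1 (fst p)) <= pdist p q /\
  Rabs (Defs.c2 (fst q) - Defs.c2 (fst p)) <= pdist p q /\
  Rabs (Defs.c3 (fst q) - Defs.c3 (fst p)) <= pdist p q /\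
  Rabs (Defs.c1 (snd q) - Defs.c1 (snd p)) <= pdist p q /\
  Rabs (Defs.c2 (snd q) - Defs.c2 (snd p)) <= pdist p q /\
  Rabs (Defs.c3 (snd q) - Defs.c3 (snd p)) <= pdist p q.
Proof.
  destruct p as [[x1 x2 x3] [v1 v2 v3]], q as [[y1 y2 y3] [w1 w2 w3]].
  unfold pdist, dot, vsub, vadd, vopp, vscale; simpl.
  pose proof (Rle_0_sqr (x1 - y1)); pose proof (Rle_0_sqr (x2 - y2)); pose proof (Rle_0_sqr (x3 - y3));
  pose proof (Rle_0_sqr (v1 - w1)); pose proof (Rle_0_sqr (v2 - w2)); pose proof (Rle_0_sqr (v3 - w3));
  unfold Rsqr in *;
  repeat split; rewrite Rabs_minus_sym;
  match goal with |- Rabs ?a <= sqrt ?s => 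
    rewrite <- sqrt_Rsqr_abs; apply sqrt_le_1_alt; unfold Rsqr; lra end.
Qed.

Definition vcont (F : P6 -> vec3) p :=
  cont (fun q => Defs.c1 (F q)) p /\ cont (fun q => Defs.c2 (F q)) p /\ cont (fun q => Defs.c3 (F q)) p.

Lemma vcont_fst p : vcont fst p.
Proof. pose proof (fun q => coord_pdist p q) as H.
  split; [|split]; apply cont_lip; intro q; apply H. Qed.
Lemma vcont_snd p : vcont snd p.
Proof. pose proof (fun q => coord_pdist p q) as H.
  split; [|split]; apply cont_lip; intro q; apply H. Qed.
Lemma vcont_const a p : vcont (fun _ => a) p.
Proof. split; [|split]; apply cont_const. Qed.

Ltac cstep := match goal with
| |- cont (fun _ => ?a) _ => apply cont_const
| |- cont (fun q => @?f q + @?g q) _ => apply cont_plus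
| |- cont (fun q => @?f q - @?g q) _ => apply cont_minus
| |- cont (fun q => @?f q * @?g q) _ => apply cont_mult
| |- cont (fun q => - @?f q) _ => apply cont_opp
| |- cont (fun q => sqrt (@?f q)) _ => apply cont_sqrt
| |- cont _ _ => eassumption
end.

Lemma vcont_add F G p : vcont F p -> vcont G p -> vcont (fun q => vadd (F q) (G q)) p.
Proof. intros (?&?&?) (?&?&?); split; [|split]; simpl; repeat cstep. Qed.
Lemma vcont_sub F G p : vcont F p -> vcont G p -> vcont (fun q => vsub (F q) (G q)) p.
Proof. intros (?&?&?) (?&?&?); split; [|split]; simpl; repeat cstep. Qed.
Lemma vcont_scale f F p : cont f p -> vcont F p -> vcont (fun q => vscale (f q) (F q)) p.
Proof. intros ? (?&?&?); split; [|split]; simpl; repeat cstep. Qed.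
Lemma vcont_cross F G p : vcont F p -> vcont G p -> vcont (fun q => cross (F q) (G q)) p.
Proof. intros (?&?&?) (?&?&?); split; [|split]; simpl; repeat cstep. Qed.
Lemma cont_dot F G p : vcont F p -> vcont G p -> cont (fun q => dot (F q) (G q)) p.
Proof. intros (?&?&?) (?&?&?); unfold dot; repeat cstep. Qed.
Lemma cont_vnorm F p : vcont F p -> cont (fun q => vnorm (F q)) p.
Proof. intros; unfold vnorm. apply cont_sqrt, cont_dot; auto. Qed.

Ltac cvstep := match goal with
| |- vcont (fun _ => ?a) _ => apply vcont_const
| |- vcont (fun q => fst q) _ => apply vcont_fst
| |- vcont (fun q => snd q) _ => apply vcont_snd
| |- vcont (fun q => vsub _ _) _ => apply vcont_sub
| |- vcont (fun q => vadd _ _) _ => apply vcont_add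
| |- vcont (fun q => cross _ _) _ => apply vcont_cross
| |- vcont (fun q => vscale _ _) _ => apply vcont_scale
| |- vcont fst _ => apply vcont_fst
| |- vcont snd _ => apply vcont_snd
| |- cont _ _ => eassumption
end.

Lemma cont_V mu k1 k2 L0 A0 p : fst p <> vzero ->
  cont (fun q => Vfun mu k1 k2 L0 A0 (fst q) (snd q)) p.
Proof.
  intros Hx.
  assert (Hs : forall q, Vfun mu k1 k2 L0 A0 (fst q) (snd q) =
     k1 / 2 * dot (vsub (cross (fst q) (snd q)) L0) (vsub (cross (fst q) (snd q)) L0)
   + k2 / 2 * dot (vsub (vsub (cross (snd q) (cross (fst q) (snd q))) (vscale (mu / vnorm (fst q)) (fst q))) A0)
                  (vsub (vsub (cross (snd q) (cross (fst q) (snd q))) (vscale (mu / vnorm (fst q)) (fst q))) A0))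
    by (intro q; apply Vfun_eq).
  assert (Hext : forall f g, (forall q, f q = g q) -> cont g p -> cont f p).
  { intros f g E H. unfold cont. rewrite (E p).
    eapply filterlim_ext; [|exact H]. intro q; symmetry; apply E. }
  eapply Hext; [exact Hs|].
  pose proof (vcont_fst p). pose proof (vcont_snd p).
  assert (Hn : cont (fun q => mu / vnorm (fst q)) p).
  { apply cont_div. apply cont_const. apply cont_vnorm; auto.
    pose proof (vnorm_pos _ Hx); lra. }
  apply cont_plus; (apply cont_mult; [apply cont_const | apply cont_dot; repeat cvstep]).
Qed.

Lemma cont_ball f p : cont f p -> forall eps, 0 < eps ->
  exists d, 0 < d /\ forall q, pdist p q < d -> Rabs (f q - f p) < eps.
Proof.
  intros Hf eps He.
  destruct (Hf (fun y => Rabs (y - f p) < eps)) as [d [Hd H]].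
  - exists (mkposreal eps He). intros y Hy. exact Hy.
  - exists d; split; auto.
Qed.


Definition nr (a b e : R) := Rabs (a - b) < e.
Definition near6 (p q : P6) (e : R) :=
  nr (Defs.c1 (fst p)) (Defs.c1 (fst q)) e /\ nr (Defs.c2 (fst p)) (Defs.c2 (fst q)) e /\
  nr (Defs.c3 (fst p)) (Defs.c3 (fst q)) e /\ nr (Defs.c1 (snd p)) (Defs.c1 (snd q)) e /\
  nr (Defs.c2 (snd p)) (Defs.c2 (snd q)) e /\ nr (Defs.c3 (snd p)) (Defs.c3 (snd q)) e.

Lemma nr_sym a b e : nr a b e -> nr b a e.
Proof. unfold nr; rewrite Rabs_minus_sym; auto. Qed.
Lemma nr_trans a b c e1 e2 : nr a b e1 -> nr b c e2 -> nr a c (e1 + e2).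
Proof. unfold nr; intros. replace (a - c) with ((a - b) + (b - c)) by ring.
  eapply Rle_lt_trans; [apply Rabs_triang|lra]. Qed.
Lemma nr_refl a e : 0 < e -> nr a a e.
Proof. unfold nr; intros; rewrite Rminus_diag, Rabs_R0; auto. Qed.
Lemma nr_mono a b e e' : e <= e' -> nr a b e -> nr a b e'.
Proof. unfold nr; intros; lra. Qed.

Lemma near6_sym p q e : near6 p q e -> near6 q p e.
Proof. intros (?&?&?&?&?&?); repeat split; apply nr_sym; auto. Qed.
Lemma near6_trans p q r e1 e2 : near6 p q e1 -> near6 q r e2 -> near6 p r (e1 + e2).
Proof. intros (?&?&?&?&?&?) (?&?&?&?&?&?); repeat split; eapply nr_trans; eauto. Qed.
Lemma near6_refl p e : 0 < e -> near6 p p e.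
Proof. intros; repeat split; apply nr_refl; auto. Qed.
Lemma near6_mono p q e e' : e <= e' -> near6 p q e -> near6 p q e'.
Proof. intros ? (?&?&?&?&?&?); repeat split; eapply nr_mono; eauto. Qed.

Lemma sq_lt_of_nr a b e : nr a b e -> (a - b) * (a - b) < e * e.
Proof. unfold nr; intro H. pose proof (Rabs_pos (a - b)).
  pose proof (Rsqr_abs (a - b)). unfold Rsqr in H1. rewrite H1.
  apply Rmult_le_0_lt_compat; auto. Qed.

Lemma near6_pdist p q e : near6 p q e -> pdist p q < 3 * e.
Proof.
  intros (H1&H2&H3&H4&H5&H6).
  assert (He : 0 < e) by (unfold nr in *; pose proof (Rabs_pos (Defs.c1 (fst p) - Defs.c1 (fst q))); lra).
  apply sq_lt_of_nr in H1, H2, H3, H4, H5, H6.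
  destruct p as [[x1 x2 x3] [v1 v2 v3]], q as [[y1 y2 y3] [w1 w2 w3]].
  unfold pdist, dot, vsub, vadd, vopp, vscale in *; simpl in *.
  rewrite <- (sqrt_pow2 (3 * e)) by lra.
  apply sqrt_lt_1_alt. split.
  - pose proof (Rle_0_sqr (x1 + -1 * y1)); pose proof (Rle_0_sqr (x2 + -1 * y2)); pose proof (Rle_0_sqr (x3 + -1 * y3));
    pose proof (Rle_0_sqr (v1 + -1 * w1)); pose proof (Rle_0_sqr (v2 + -1 * w2)); pose proof (Rle_0_sqr (v3 + -1 * w3));
    unfold Rsqr in *; lra.
  - replace (x1 + -1 * y1) with (x1 - y1) by ring. replace (x2 + -1 * y2) with (x2 - y2) by ring.
    replace (x3 + -1 * y3) with (x3 - y3) by ring. replace (v1 + -1 * w1) with (v1 - w1) by ring.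
    replace (v2 + -1 * w2) with (v2 - w2) by ring. replace (v3 + -1 * w3) with (v3 - w3) by ring.
    nra.
Qed.

Lemma grid1 M h : 0 < h -> exists L : list R, forall x, - M <= x <= M ->
  exists g, In g L /\ nr g x h.
Proof.
  intros Hh.
  destruct (INR_unbounded (2 * M / h)) as [n Hn].
  set (f := fun k => - M + INR k * h).
  assert (Hind : forall m x, - M <= x <= - M + INR m * h ->
            exists g, In g (map f (seq 0 (S m))) /\ nr g x h).
  { induction m as [|m IH]; intros x Hx.
    - exists (f 0%nat). split; [simpl; auto|]. unfold f, nr; simpl in *.
      replace (- M + 0 * h - x) with 0 by lra. rewrite Rabs_R0; lra.
    - rewrite seq_S, map_app.
      destruct (Rle_or_lt x (- M + INR m * h)) as [Hle|Hlt].
      + destruct (IH x (conj (proj1 Hx) Hle)) as [g [Hg Hgx]].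
        exists g; split; auto. apply in_or_app; left; auto.
      + exists (f (S m)). split. apply in_or_app; right; simpl; auto.
        unfold f, nr. rewrite S_INR in *. rewrite Rabs_right; lra. }
  exists (map f (seq 0 (S n))). intros x Hx. apply Hind.
  split; [lra|].
  assert (2 * M < INR n * h).
  { apply Rmult_lt_compat_r with (r := h) in Hn; auto. unfold Rdiv in Hn.
    rewrite Rmult_assoc, Rinv_l, Rmult_1_r in Hn; lra. }
  lra.
Qed.

Definition box (M : R) (y : P6) :=
  Rabs (Defs.c1 (fst y)) <= M /\ Rabs (Defs.c2 (fst y)) <= M /\ Rabs (Defs.c3 (fst y)) <= M /\
  Rabs (Defs.c1 (snd y)) <= M /\ Rabs (Defs.c2 (snd y)) <= M /\ Rabs (Defs.c3 (snd y)) <= M.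

Lemma grid6 M h : 0 < h -> exists G : list P6, forall y, box M y ->
  exists g, In g G /\ near6 g y h.
Proof.
  intros Hh. destruct (grid1 M h Hh) as [L HL].
  exists (flat_map (fun a => flat_map (fun b => flat_map (fun c => flat_map (fun d =>
            flat_map (fun e => map (fun f => (mk3 a b c, mk3 d e f)) L) L) L) L) L) L).
  intros [[x1 x2 x3] [v1 v2 v3]] (B1&B2&B3&B4&B5&B6). simpl in *.
  apply Rabs_le_between in B1, B2, B3, B4, B5, B6.
  destruct (HL _ B1) as [g1 [I1 N1]]. destruct (HL _ B2) as [g2 [I2 N2]].
  destruct (HL _ B3) as [g3 [I3 N3]]. destruct (HL _ B4) as [g4 [I4 N4]].
  destruct (HL _ B5) as [g5 [I5 N5]]. destruct (HL _ B6) as [g6 [I6 N6]].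
  exists (mk3 g1 g2 g3, mk3 g4 g5 g6). split.
  - apply in_flat_map; exists g1; split; [exact I1|].
    apply in_flat_map; exists g2; split; [exact I2|].
    apply in_flat_map; exists g3; split; [exact I3|].
    apply in_flat_map; exists g4; split; [exact I4|].
    apply in_flat_map; exists g5; split; [exact I5|].
    apply in_map_iff; exists g6; split; [reflexivity|exact I6].
  - repeat split; simpl; auto.
Qed.


Definition toT (p : P6) : Compactness.Tn 6 R :=
  (Defs.c1 (fst p), (Defs.c2 (fst p), (Defs.c3 (fst p),
   (Defs.c1 (snd p), (Defs.c2 (snd p), (Defs.c3 (snd p), tt)))))).
Definition ofT (t : Compactness.Tn 6 R) : P6 :=
  let '(a, (b, (c, (d, (e, (f, _)))))) := t in (mk3 a b c, mk3 d e f).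

Lemma lebesgue {I : Type} (U : I -> P6 -> Prop) (S : P6 -> Prop) M :
  (forall t, exists eta, 0 < eta /\ ((exists i, forall y, near6 t y eta -> U i y) \/
                                     (forall y, near6 t y eta -> ~ S y))) ->
  exists d, 0 < d /\ forall y, box M y ->
    (exists i, forall z, near6 y z d -> U i z) \/ (forall z, near6 y z d -> ~ S z).
Proof.
  intros Heta.
  assert (Hf : forall t : Compactness.Tn 6 R, {eta : R | 0 < eta /\
      ((exists i, forall y, near6 (ofT t) y eta -> U i y) \/ (forall y, near6 (ofT t) y eta -> ~ S y))}).
  { intro t. apply constructive_indefinite_description. apply Heta. }
  assert (Hpos : forall t, 0 < proj1_sig (Hf t) / 2).
  { intro t. destruct (proj2_sig (Hf t)) as [H _]. lra. }
  set (delta := fun t => mkposreal _ (Hpos t)).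
  set (a := toT (mk3 (-M) (-M) (-M), mk3 (-M) (-M) (-M))).
  set (b := toT (mk3 M M M, mk3 M M M)).
  destruct (compactness_value 6 a b delta) as [d Hd].
  exists d. split; [apply cond_pos|].
  intros y Hy.
  apply NNPP. intro Hneg.
  assert (Hb : Compactness.bounded_n 6 a b (toT y)).
  { destruct y as [[y1 y2 y3] [y4 y5 y6]]. destruct Hy as (B1&B2&B3&B4&B5&B6). simpl in *.
    apply Rabs_le_between in B1, B2, B3, B4, B5, B6. tauto. }
  apply (Hd _ Hb). intros [t [Htb [Htc Hdle]]].
  apply Hneg.
  pose proof (proj2_sig (Hf t)) as [Hetap HQ].
  set (eta := proj1_sig (Hf t)) in *.
  assert (Hnear : forall z, near6 y z d -> near6 (ofT t) z eta).
  { intros z Hz.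
    assert (Hyt : near6 (ofT t) y (eta / 2)).
    { clear - Htc. unfold delta in Htc. simpl in Htc. fold eta in Htc.
      destruct y as [[y1 y2 y3] [y4 y5 y6]].
      destruct t as [t1 [t2 [t3 [t4 [t5 [t6 []]]]]]]. simpl in *.
      unfold near6, nr; simpl. rewrite !(Rabs_minus_sym t1), !(Rabs_minus_sym t2), !(Rabs_minus_sym t3),
        !(Rabs_minus_sym t4), !(Rabs_minus_sym t5), !(Rabs_minus_sym t6). tauto. }
    replace eta with (eta / 2 + eta / 2) by field.
    eapply near6_trans; [exact Hyt|]. eapply near6_mono; [|exact Hz].
    unfold delta in Hdle; simpl in Hdle. fold eta in Hdle. lra. }
  destruct HQ as [[i Hi]|Hi].
  - left. exists i. intros z Hz. apply Hi, Hnear, Hz.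
  - right. intros z Hz. apply Hi, Hnear, Hz.
Qed.

Lemma select {I : Type} (U : I -> P6 -> Prop) (S : P6 -> Prop) M d :
  0 < d -> (forall y, S y -> box M y) ->
  (forall y, box M y -> (exists i, forall z, near6 y z d -> U i z) \/ (forall z, near6 y z d -> ~ S z)) ->
  forall G : list P6, exists l : list I, forall g, In g G ->
    (exists y, S y /\ near6 g y (d / 2)) -> exists i, In i l /\ forall z, near6 g z (d / 2) -> U i z.
Proof.
  intros Hd HSb Hleb G. induction G as [|g G IH].
  - exists nil. intros g [].
  - destruct IH as [l Hl].
    destruct (classic (exists y, S y /\ near6 g y (d / 2))) as [[y [Sy Ny]]|Hno].
    + destruct (Hleb y (HSb y Sy)) as [[i Hi]|Hi].
      * exists (i :: l). intros g' [<-|Hg'] Hex.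
        -- exists i; split; [left; auto|]. intros z Hz. apply Hi.
           replace d with (d / 2 + d / 2) by field.
           eapply near6_trans; [apply near6_sym; exact Ny|exact Hz].
        -- destruct (Hl g' Hg' Hex) as [j [Hj Hj']]. exists j; split; [right; auto|auto].
      * exfalso. apply (Hi y); auto. apply near6_refl; auto.
    + exists l. intros g' [<-|Hg'] Hex.
      * contradiction.
      * apply Hl; auto.
Qed.

Definition Sset mu k1 k2 L0 A0 c (p : P6) :=
  fst p <> vzero /\ 0 <= Vfun mu k1 k2 L0 A0 (fst p) (snd p) <= c.

Lemma V_ge0 mu k1 k2 L0 A0 x v : 0 < k1 -> 0 < k2 -> 0 <= Vfun mu k1 k2 L0 A0 x v.
Proof. intros. unfold Vfun.
  pose proof (pow2_ge_0 (vnorm (vsub (Lvec x v) L0))).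
  pose proof (pow2_ge_0 (vnorm (vsub (Avec mu x v) A0))).
  assert (0 <= k1 / 2) by lra. assert (0 <= k2 / 2) by lra. nra. Qed.

Lemma fst_pdist p q : vnorm (vsub (fst p) (fst q)) <= pdist p q.
Proof. unfold vnorm, pdist. apply sqrt_le_1_alt. pose proof (dot_ge0 (vsub (snd p) (snd q))). lra. Qed.

Lemma vnorm_zero : vnorm vzero = 0.
Proof. unfold vnorm, dot, vzero; simpl. replace (0*0+0*0+0*0) with 0 by ring. apply sqrt_0. Qed.

Lemma closedS mu k1 k2 L0 A0 c rho :
  0 < k1 -> 0 < k2 -> 0 < rho ->
  (forall x v, x <> vzero -> Vfun mu k1 k2 L0 A0 x v <= c -> rho <= vnorm x) ->
  forall p, ~ Sset mu k1 k2 L0 A0 c p ->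
  exists eps, 0 < eps /\ forall q, pdist p q < eps -> ~ Sset mu k1 k2 L0 A0 c q.
Proof.
  intros Hk1 Hk2 Hrho Hb p Hp.
  destruct (Rlt_or_le (vnorm (fst p)) rho) as [Hlt|Hge].
  - exists (rho - vnorm (fst p)). split; [lra|].
    intros q Hq [Hq1 Hq2].
    pose proof (Hb _ _ Hq1 (proj2 Hq2)).
    pose proof (rev_tri (fst q) (fst p)).
    rewrite vnorm_sub_sym in H0. pose proof (fst_pdist p q). lra.
  - assert (Hx : fst p <> vzero).
    { intro E. rewrite E, vnorm_zero in Hge. lra. }
    assert (HV : c < Vfun mu k1 k2 L0 A0 (fst p) (snd p)).
    { destruct (Rlt_or_le c (Vfun mu k1 k2 L0 A0 (fst p) (snd p))) as [h|h]; auto.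
      exfalso. apply Hp. split; auto. split; auto. apply V_ge0; auto. }
    destruct (cont_ball _ _ (cont_V mu k1 k2 L0 A0 p Hx) (Vfun mu k1 k2 L0 A0 (fst p) (snd p) - c))
      as [d [Hd Hd']]. lra.
    exists d; split; auto. intros q Hq [_ [_ Hq2]].
    pose proof (Hd' q Hq). apply Rabs_def2 in H. lra.
Qed.

Lemma part2 mu k1 k2 L0 A0 c :
  0 < mu -> 0 < k1 -> 0 < k2 -> vnorm A0 < mu -> 0 < c ->
  c < Rmin (k1 * vnorm L0 ^ 2 / 2) (k2 * (mu - vnorm A0) ^ 2 / 2) ->
  compact6 (fun p => fst p <> vzero /\ 0 <= Vfun mu k1 k2 L0 A0 (fst p) (snd p) <= c).
Proof.
  intros Hmu Hk1 Hk2 HA0 Hc Hcm.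
  destruct (Sbounds mu k1 k2 L0 A0 c Hmu Hk1 Hk2 HA0 Hc Hcm) as [rho [M [Hrho [HM Hb]]]].
  change (compact6 (Sset mu k1 k2 L0 A0 c)).
  intros I U HU Hcov.
  set (S := Sset mu k1 k2 L0 A0 c).
  assert (HSb : forall y, S y -> box M y).
  { intros [x v] [Hx [_ HV]]. simpl in *. destruct (Hb x v Hx HV) as [_ [Hx2 Hv2]].
    destruct (coord_le x) as (a1&a2&a3). destruct (coord_le v) as (b1&b2&b3).
    unfold box; simpl. repeat split; lra. }
  assert (Heta : forall t, exists eta, 0 < eta /\ ((exists i, forall y, near6 t y eta -> U i y) \/
                                     (forall y, near6 t y eta -> ~ S y))).
  { intro t. destruct (classic (S t)) as [St|nSt].
    - destruct (Hcov t St) as [i Hi]. destruct (HU i t Hi) as [eps [He HUe]].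
      exists (eps / 3). split; [lra|]. left. exists i. intros y Hy.
      apply HUe. pose proof (near6_pdist _ _ _ Hy). lra.
    - destruct (closedS mu k1 k2 L0 A0 c rho Hk1 Hk2 Hrho (fun x v Hx HV => proj1 (Hb x v Hx HV)) t nSt)
        as [eps [He Hc']].
      exists (eps / 3). split; [lra|]. right. intros y Hy.
      apply Hc'. pose proof (near6_pdist _ _ _ Hy). lra. }
  destruct (lebesgue U S M Heta) as [d [Hd Hleb]].
  destruct (grid6 M (d / 2)) as [G HG]; [lra|].
  destruct (select U S M d Hd HSb Hleb G) as [l Hl].
  exists l. intros p Sp.
  destruct (HG p (HSb p Sp)) as [g [Hg Hgp]].
  destruct (Hl g Hg (ex_intro _ p (conj Sp Hgp))) as [i [Hi HUi]].
  exists i. split; auto.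
Qed.


Theorem lemma6 (mu k1 k2 : R) (L0 A0 : vec3)
  (Hmu : 0 < mu) (Hk1 : 0 < k1) (Hk2 : 0 < k2)
  (Hperp : dot L0 A0 = 0) (HL0 : L0 <> vzero) (HA0 : vnorm A0 < mu) :
  (* (1): the formulas are the gradients of V, and V is conserved along the Kepler field *)
  (forall x v : vec3, x <> vzero ->
     (forall w : vec3,
        derivable_pt_lim (fun t => Vfun mu k1 k2 L0 A0 (vadd x (vscale t w)) v) 0
                         (dot (gradx_V mu k1 k2 L0 A0 x v) w)) /\
     (forall w : vec3,
        derivable_pt_lim (fun t => Vfun mu k1 k2 L0 A0 x (vadd v (vscale t w))) 0
                         (dot (gradv_V mu k1 k2 L0 A0 x v) w)) /\
     dot (gradx_V mu k1 k2 L0 A0 x v) v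
     + dot (gradv_V mu k1 k2 L0 A0 x v) (vscale (- (mu / (vnorm x ^ 3))) x) = 0) /\
  (* (2): sublevel sets are compact subsets of R^3_0 x R^3 *)
  (forall c : R,
     0 < c -> c < Rmin (k1 * vnorm L0 ^ 2 / 2) (k2 * (mu - vnorm A0) ^ 2 / 2) ->
     compact6 (fun p => fst p <> vzero /\
                        0 <= Vfun mu k1 k2 L0 A0 (fst p) (snd p) <= c)).
Proof.
  split.
  - intros x v Hx. split; [|split].
    + intro w. apply part1x; auto.
    + intro w. apply part1v; auto.
    + apply part1c; auto.
  - intros c Hc Hcm. apply part2; auto.
Qed.
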